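(* In the setting described in the context: (1) If the model is DUR with constants $d,k$ and the parametrisation $(\tilde X,\Theta)$ is GTIP, then for all sufficiently small $\alpha>0$ there is $0<K<\infty$ such that $\mathbf E\{e^{\alpha|X|}\mid Y=y,\Theta=\theta\}\le e^{\alpha|\theta|}(1-\alpha d/2)+K$ for all $|\theta|>k$. (2) If the model is PUR with constants $d,k$ and the parametrisation $(X,\Theta)$ is GTIP, then for all sufficiently small $\alpha>0$ there is $0<K<\infty$ such that $\mathbf E\{e^{\alpha|y-\tilde X|}\mid Y=y,\Theta=\theta\}\le e^{\alpha|\theta|}(1-\alpha d/2)+K$ for all $|\theta|>k$.
   Context: Fix an observed value $y\in\mathbb R$. Consider the model $Y=X+Z_1$, $X=\Theta+Z_2$, where $Z_1,Z_2$ are independent real random variables, independent of $\Theta$, whose distributions are symmetric about $0$ and have continuous, bounded, everywhere positive Lebesgue densities $f_1,f_2$; $\Theta$ is given the improper flat (Lebesgue) prior on $\mathbb R$, and the posterior $\mathcal L(X,\Theta\mid Y=y)$ is proper. Write $\tilde X=X-\Theta$. A parametrisation $(U,\Theta)$, $U\in\{X,\tilde X\}$, is GTIP (geometrically tight in parameter) if there are constants $a,b>0$ not depending on $\theta$ such that $\mathbf P(|U|>x\mid Y=y,\Theta=\theta)\le ae^{-bx}$ for all $\theta\in\mathbb R$ and $x\ge0$. The model is DUR (data uniformly relevant) with constants $d,k>0$ if $|\mathbf E\{X\mid Y=y,\Theta=\theta\}|\le|\theta|-d$ for all $|\theta|>k$; it is PUR (parameter uniformly relevant) with constants $d,k>0$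 if $\operatorname{sgn}(\theta)\,\mathbf E\{X-y\mid Y=y,\Theta=\theta\}\ge d$ for all $|\theta|>k$. *)

(* Defs.v *)
From Stdlib Require Import Reals Lra.
Open Scope R_scope.

Definition improper_integral (f : R -> R) (l : R) : Prop :=
  (forall a b, inhabited (Riemann_integrable f a b)) /\
  forall eps, 0 < eps -> exists M, forall a b (pr : Riemann_integrable f a b),
    a <= - M -> M <= b -> Rabs (RiemannInt pr - l) < eps.

Definition sym_density (f : R -> R) : Prop :=
  (forall x, f (- x) = f x) /\
  continuity f /\
  (exists B, forall x, f x <= B) /\
  (forall x, 0 < f x) /\
  improper_integral f 1.

(* Unnormalised conditional density of X given Y = y, Theta = theta
   (flat prior on Theta):  x |-> f1 (y - x) * f2 (x - theta). *)
Definition cdens (f1 f2 : R -> R) (y theta : R) (x : R) : R :=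
  f1 (y - x) * f2 (x - theta).

(* cond_exp f1 f2 y g theta m :  E{ g(X) | Y = y, Theta = theta } exists and equals m. *)
Definition cond_exp (f1 f2 : R -> R) (y : R) (g : R -> R) (theta m : R) : Prop :=
  exists N D, improper_integral (cdens f1 f2 y theta) D /\
              improper_integral (fun x => g x * cdens f1 f2 y theta x) N /\
              m = N / D.

Definition ind_gt (t x : R) : R := if Rlt_dec x t then 1 else 0.

(* GTIP for a parametrisation (U, Theta) where U = Ufun theta X
   (Ufun theta x = x for U = X,  = x - theta for U = X~). *)
Definition GTIP (f1 f2 : R -> R) (y : R) (Ufun : R -> R -> R) : Prop :=
  exists a b, 0 < a /\ 0 < b /\
    forall theta x, 0 <= x ->
      exists p, cond_exp f1 f2 y (fun u => ind_gt (Rabs (Ufun theta u)) x) theta p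
                /\ p <= a * exp (- b * x).

Definition DUR (f1 f2 : R -> R) (y d k : R) : Prop :=
  forall theta, Rabs theta > k ->
    exists m, cond_exp f1 f2 y (fun x => x) theta m /\ Rabs m <= Rabs theta - d.

Definition sgn (t : R) : R := if Rlt_dec 0 t then 1 else if Rlt_dec t 0 then -1 else 0.

Definition PUR (f1 f2 : R -> R) (y d k : R) : Prop :=
  forall theta, Rabs theta > k ->
    exists m, cond_exp f1 f2 y (fun x => x - y) theta m /\ sgn theta * m >= d.

(* Main.v *)
Require Import Defs.
From Stdlib Require Import Reals Lra Lia Psatz FunctionalExtensionality Classical.
Open Scope R_scope.

Definition locint (g:R->R) := forall a b, inhabited (Riemann_integrable g a b).

Lemma exp_le' x y : x <= y -> exp x <= exp y.
Proof. intros [H|H]; [left; apply exp_increasing; auto| subst; lra]. Qed.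

Lemma RI_nonneg g a b (pr: Riemann_integrable g a b) :
  a <= b -> (forall x, a<x<b -> 0 <= g x) -> 0 <= RiemannInt pr.
Proof.
  intros Hab Hg.
  assert (H0 := RiemannInt_P19 (RiemannInt_P14 a b 0) pr Hab).
  rewrite RiemannInt_P15 in H0. unfold fct_cte in H0. assert (H1 : 0 * (b - a) = 0) by ring. rewrite H1 in H0. apply H0. intros; unfold fct_cte; auto.
Qed.

Lemma RI_mono g h a b (pr1: Riemann_integrable g a b) (pr2: Riemann_integrable h a b) :
  a <= b -> (forall x, g x <= h x) -> RiemannInt pr1 <= RiemannInt pr2.
Proof. intros; apply RiemannInt_P19; auto. Qed.

Lemma RI_interval g a0 b0 a b (li : locint g) (pr0 : Riemann_integrable g a0 b0)
  (pr : Riemann_integrable g a b) :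
  (forall x, 0 <= g x) -> a <= a0 -> a0 <= b0 -> b0 <= b -> RiemannInt pr0 <= RiemannInt pr.
Proof.
  intros Hg H1 H2 H3.
  destruct (li a a0) as [p1]. destruct (li b0 b) as [p2].
  destruct (li a b0) as [p3].
  assert (E1 := RiemannInt_P26 p1 pr0 p3).
  assert (E2 := RiemannInt_P26 p3 p2 pr).
  assert (0 <= RiemannInt p1) by (apply RI_nonneg; auto).
  assert (0 <= RiemannInt p2) by (apply RI_nonneg; auto).
  lra.
Qed.

Lemma improper_loc g L : improper_integral g L -> locint g.
Proof. intros [H _]; exact H. Qed.

Lemma improper_le g L a b (pr : Riemann_integrable g a b) :
  improper_integral g L -> (forall x, 0 <= g x) -> a <= b -> RiemannInt pr <= L.
Proof.
  intros [li H] Hg Hab.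
  apply Rnot_lt_le; intro Hlt.
  destruct (H (RiemannInt pr - L)) as [M HM]; [lra|].
  set (M' := Rmax M (Rmax (Rabs a) (Rabs b))).
  assert (HM1 : M <= M') by apply Rmax_l.
  assert (HM2 : Rabs a <= M') by (unfold M'; eapply Rle_trans; [apply Rmax_l|apply Rmax_r]).
  assert (HM3 : Rabs b <= M') by (unfold M'; eapply Rle_trans; [apply Rmax_r|apply Rmax_r]).
  destruct (li (-M') M') as [p].
  assert (Hx := HM (-M') M' p ltac:(lra) ltac:(lra)).
  assert (RiemannInt pr <= RiemannInt p).
  { apply RI_interval; auto; (split_Rabs; lra). }
  split_Rabs; lra.
Qed.

Lemma improper_unique g L1 L2 : improper_integral g L1 -> improper_integral g L2 -> L1 = L2.
Proof.
  intros [li H1] [_ H2].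
  apply NNPP; intro Hne.
  assert (Hp : 0 < Rabs (L1 - L2) / 4) by (assert (0 < Rabs (L1-L2)) by (apply Rabs_pos_lt; lra); lra).
  destruct (H1 _ Hp) as [M1 HM1]. destruct (H2 _ Hp) as [M2 HM2].
  set (M := Rmax M1 M2).
  assert (M1 <= M) by apply Rmax_l. assert (M2 <= M) by apply Rmax_r.
  destruct (li (-M) M) as [p].
  assert (A1 := HM1 (-M) M p ltac:(lra) ltac:(lra)).
  assert (A2 := HM2 (-M) M p ltac:(lra) ltac:(lra)).
  revert A1 A2 Hp. split_Rabs; lra.
Qed.

Lemma improper_mono g h Lg Lh : improper_integral g Lg -> improper_integral h Lh ->
  (forall x, g x <= h x) -> Lg <= Lh.
Proof.
  intros [li1 H1] [li2 H2] Hgh.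
  apply Rnot_lt_le; intro Hlt.
  assert (Hp : 0 < (Lg - Lh) / 4) by lra.
  destruct (H1 _ Hp) as [M1 HM1]. destruct (H2 _ Hp) as [M2 HM2].
  set (M := Rmax (Rmax M1 M2) 0).
  assert (M1 <= M) by (unfold M; eapply Rle_trans; [apply Rmax_l|apply Rmax_l]).
  assert (M2 <= M) by (unfold M; eapply Rle_trans; [apply Rmax_r|apply Rmax_l]).
  assert (0 <= M) by apply Rmax_r.
  destruct (li1 (-M) M) as [p1]. destruct (li2 (-M) M) as [p2].
  assert (A1 := HM1 (-M) M p1 ltac:(lra) ltac:(lra)).
  assert (A2 := HM2 (-M) M p2 ltac:(lra) ltac:(lra)).
  assert (RiemannInt p1 <= RiemannInt p2) by (apply RI_mono; auto; lra).
  revert A1 A2. split_Rabs; lra.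
Qed.

Lemma improper_lin f g Lf Lg p : improper_integral f Lf -> improper_integral g Lg ->
  improper_integral (fun x => f x + p * g x) (Lf + p * Lg).
Proof.
  intros [li1 H1] [li2 H2]. split.
  - intros a b. destruct (li1 a b) as [p1]; destruct (li2 a b) as [p2].
    constructor. apply RiemannInt_P10; auto.
  - intros eps Heps.
    set (e := eps / (2 * (Rabs p + 1))).
    assert (He : 0 < e) by (unfold e; apply Rdiv_lt_0_compat; [lra| assert (0<=Rabs p) by apply Rabs_pos; lra]).
    destruct (H1 _ He) as [M1 HM1]. destruct (H2 _ He) as [M2 HM2].
    exists (Rmax M1 M2). intros a b pr Ha Hb.
    assert (M1 <= Rmax M1 M2) by apply Rmax_l. assert (M2 <= Rmax M1 M2) by apply Rmax_r.
    destruct (li1 a b) as [p1]; destruct (li2 a b) as [p2].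
    rewrite (RiemannInt_P13 p1 p2 pr).
    assert (A1 := HM1 a b p1 ltac:(lra) ltac:(lra)).
    assert (A2 := HM2 a b p2 ltac:(lra) ltac:(lra)).
    replace (RiemannInt p1 + p * RiemannInt p2 - (Lf + p * Lg)) with
      ((RiemannInt p1 - Lf) + p * (RiemannInt p2 - Lg)) by ring.
    eapply Rle_lt_trans; [apply Rabs_triang|]. rewrite Rabs_mult.
    assert (0 <= Rabs p) by apply Rabs_pos.
    assert (Rabs p * Rabs (RiemannInt p2 - Lg) <= Rabs p * e) by (apply Rmult_le_compat_l; lra).
    assert (e * (2 * (Rabs p + 1)) = eps) by (unfold e; field; lra).
    nra.
Qed.

Lemma improper_ext f g L : (forall x, f x = g x) -> improper_integral f L -> improper_integral g L.
Proof. intros H; replace g with f; auto. apply functional_extensionality; auto. Qed.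

Lemma cont_locint g : continuity g -> locint g.
Proof.
  intros Hc a b. constructor.
  destruct (Rle_lt_dec a b).
  - apply continuity_implies_RiemannInt; auto.
  - apply RiemannInt_P1. apply continuity_implies_RiemannInt; auto; lra.
Qed.

Lemma improper_exists g S : locint g -> (forall x, 0 <= g x) ->
  (forall a b (pr : Riemann_integrable g a b), a <= b -> RiemannInt pr <= S) ->
  exists L, improper_integral g L /\ L <= S.
Proof.
  intros li Hg HS.
  set (E := fun r => exists a b (pr : Riemann_integrable g a b), a <= b /\ r = RiemannInt pr).
  assert (Hb : bound E) by (exists S; intros r [a [b [pr [Hab ->]]]]; auto).
  assert (Hne : exists r, E r).
  { destruct (li 0 0) as [p]. exists (RiemannInt p). exists 0, 0, p. split; auto; lra. }
  destruct (completeness E Hb Hne) as [L [HL1 HL2]].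
  exists L. split; [split|].
  - exact li.
  - intros eps Heps.
    destruct (classic (exists r, E r /\ L - eps < r)) as [[r [[a0 [b0 [p0 [Hab0 ->]]]] Hr]] | Hn].
    + exists (Rmax (Rabs a0) (Rabs b0)). intros a b pr Ha Hb'.
      assert (Rabs a0 <= Rmax (Rabs a0) (Rabs b0)) by apply Rmax_l.
      assert (Rabs b0 <= Rmax (Rabs a0) (Rabs b0)) by apply Rmax_r.
      assert (RiemannInt p0 <= RiemannInt pr).
      { apply RI_interval; auto; split_Rabs; lra. }
      assert (RiemannInt pr <= L).
      { apply HL1. exists a, b, pr. split; auto. split_Rabs; lra. }
      split_Rabs; lra.
    + exfalso. assert (L <= L - eps); [|lra].
      apply HL2. intros r Hr. apply Rnot_lt_le; intro. apply Hn; exists r; auto.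
  - apply HL2. intros r [a [b [pr [Hab ->]]]]; apply HS; auto.
Qed.


Lemma exp_ge1 x : 0 <= x -> 1 <= exp x.
Proof. intros; rewrite <- exp_0; apply exp_le'; auto. Qed.

Lemma exp_quad z : exp z <= 1 + z + 4 * z^2 * exp (Rabs z).
Proof.
  assert (He : 1 <= exp (Rabs z)) by (apply exp_ge1; apply Rabs_pos).
  destruct (Rle_or_lt z (1/2)).
  - assert (H1 := exp_ineq1_le (- z)).
    assert (Hm : exp z * exp (- z) = 1) by (rewrite <- exp_plus; replace (z + - z) with 0 by ring; apply exp_0).
    assert (Hp := exp_pos z).
    assert (exp z <= 1 + z + 2 * z^2).
    { assert (exp z * (1 - z) <= 1) by nra.
      assert (0 <= z^2*(1-2*z)) by (apply Rmult_le_pos; nra).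
      assert (1 <= (1 + z + 2*z^2) * (1 - z)) by nra.
      assert (exp z * 1 <= exp z * ((1 + z + 2*z^2) * (1 - z))) by (apply Rmult_le_compat_l; lra).
      assert (0 < 1 - z) by lra. apply (Rmult_le_reg_r (1 - z)); lra. }
    nra.
  - rewrite Rabs_right by lra. assert (0 < exp z) by apply exp_pos. assert (1 <= 4*z^2) by nra. assert (exp z * 1 <= exp z * (4*z^2)) by (apply Rmult_le_compat_l; lra). lra.
Qed.

Lemma sq_le_exp w : 0 <= w -> w^2 <= 4 * exp w.
Proof.
  intros Hw. assert (H := exp_ineq1_le (w/2)).
  replace w with (w/2 + w/2) at 2 by field. rewrite exp_plus. nra.
Qed.

Lemma pointwise T v alpha beta : 0 <= T -> 0 < alpha -> 0 < beta -> alpha <= beta / 2 ->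
  exp (alpha * Rabs (T + v)) <=
  exp (alpha * T) * (1 + alpha * v + (64 / beta^2) * alpha^2 * exp (beta * Rabs v))
  + exp (beta * Rabs v).
Proof.
  intros HT Ha Hb Hab.
  assert (Hv : 0 <= Rabs v) by apply Rabs_pos.
  assert (Q1 : v^2 <= (16 / beta^2) * exp (beta * Rabs v / 2)).
  { assert (H := sq_le_exp (beta * Rabs v / 2) ltac:(nra)).
    rewrite <- pow2_abs.
    apply (Rmult_le_reg_l (beta^2)); [nra|].
    replace (beta ^ 2 * (16 / beta ^ 2 * exp (beta * Rabs v / 2))) with (16 * exp (beta * Rabs v / 2)) by (field; lra).
    nra. }
  assert (Q2 : exp (beta * Rabs v / 2) * exp (alpha * Rabs v) <= exp (beta * Rabs v)).
  { rewrite <- exp_plus. apply exp_le'. nra. }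
  assert (Hea := exp_pos (alpha * Rabs v)).
  assert (Heb := exp_pos (beta * Rabs v / 2)).
  assert (Q : 4 * (alpha*v)^2 * exp (Rabs (alpha * v)) <= (64 / beta^2) * alpha^2 * exp (beta * Rabs v)).
  { rewrite Rabs_mult, (Rabs_right alpha) by lra.
    assert (4 * (alpha*v)^2 * exp (alpha * Rabs v) <= 4 * alpha^2 * ((16 / beta^2) * exp (beta * Rabs v / 2)) * exp (alpha * Rabs v)).
    { apply Rmult_le_compat_r; [lra|]. replace ((alpha*v)^2) with (alpha^2 * v^2) by ring.
      assert (0 <= alpha^2) by nra. nra. }
    assert (0 <= 64 / beta^2 * alpha^2) by (apply Rmult_le_pos; [unfold Rdiv; apply Rmult_le_pos; [lra| left; apply Rinv_0_lt_compat; nra]| nra]).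
    assert (4 * alpha ^ 2 * (16 / beta ^ 2 * exp (beta * Rabs v / 2)) * exp (alpha * Rabs v)
            = (64 / beta^2 * alpha^2) * (exp (beta * Rabs v / 2) * exp (alpha * Rabs v))) by (field; lra).
    nra. }
  assert (EQ := exp_quad (alpha * v)).
  assert (HeT := exp_pos (alpha * T)).
  assert (Hebv := exp_pos (beta * Rabs v)).
  assert (Hpos : 0 <= 1 + alpha * v + 64 / beta ^ 2 * alpha ^ 2 * exp (beta * Rabs v)).
  { assert (H0 := exp_pos (alpha * v)). lra. }
  destruct (Rle_or_lt 0 (T + v)).
  - rewrite Rabs_right by lra. rewrite Rmult_plus_distr_l, exp_plus.
    assert (exp (alpha * v) <= 1 + alpha * v + 64 / beta ^ 2 * alpha ^ 2 * exp (beta * Rabs v)) by lra.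
    assert (exp (alpha * T) * exp (alpha * v) <= exp (alpha * T) * (1 + alpha * v + 64 / beta ^ 2 * alpha ^ 2 * exp (beta * Rabs v))) by (apply Rmult_le_compat_l; lra).
    lra.
  - rewrite Rabs_left by lra.
    assert (exp (alpha * - (T + v)) <= exp (beta * Rabs v)).
    { apply exp_le'. assert (- (T+v) <= Rabs v) by (split_Rabs; lra). nra. }
    assert (0 <= exp (alpha * T) * (1 + alpha * v + 64 / beta ^ 2 * alpha ^ 2 * exp (beta * Rabs v))) by (apply Rmult_le_pos; lra).
    lra.
Qed.

Lemma exp_INR r n : exp (r * INR n) = exp r ^ n.
Proof.
  induction n. simpl. rewrite Rmult_0_r; apply exp_0.
  rewrite S_INR, Rmult_plus_distr_l, exp_plus, IHn, Rmult_1_r. simpl; ring.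
Qed.

Lemma ind_01 t x : 0 <= ind_gt t x <= 1.
Proof. unfold ind_gt; destruct (Rlt_dec x t); lra. Qed.

Fixpoint Ws (beta : R) (N : nat) (w0 : R) : R :=
  match N with
  | O => 1 + exp (beta * 1) * ind_gt w0 0
  | S N' => Ws beta N' w0 + exp (beta * (INR (S N') + 1)) * ind_gt w0 (INR (S N'))
  end.

Lemma Ws_ge1 beta N w0 : 1 <= Ws beta N w0.
Proof.
  induction N; cbn [Ws].
  - assert (H := ind_01 w0 0). assert (H2 := exp_pos (beta*1)).
    assert (0 <= exp (beta * 1) * ind_gt w0 0) by (apply Rmult_le_pos; lra). lra.
  - assert (H := ind_01 w0 (INR (S N))). assert (H2 := exp_pos (beta * (INR (S N) + 1))).
    assert (0 <= exp (beta * (INR (S N) + 1)) * ind_gt w0 (INR (S N))) by (apply Rmult_le_pos; lra). lra.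
Qed.

Lemma Ws_bound beta N w0 : 0 <= beta -> 0 <= w0 -> w0 <= INR N + 1 -> exp (beta * w0) <= Ws beta N w0.
Proof.
  intros Hb. revert w0. induction N; intros w0 H0 H1; cbn [Ws].
  - simpl INR in H1. unfold ind_gt. destruct (Rlt_dec 0 w0).
    + assert (exp (beta * w0) <= exp (beta * 1)) by (apply exp_le'; nra). lra.
    + replace w0 with 0 by lra. rewrite Rmult_0_r, exp_0. lra.
  - destruct (Rle_or_lt w0 (INR N + 1)).
    + assert (H2 := IHN w0 H0 H). assert (H3 := ind_01 w0 (INR (S N))).
      assert (H4 := exp_pos (beta * (INR (S N) + 1))). nra.
    + unfold ind_gt. rewrite S_INR. destruct (Rlt_dec (INR N + 1) w0); [|lra].
      rewrite S_INR in H1.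
      assert (exp (beta * w0) <= exp (beta * (INR N + 1 + 1))) by (apply exp_le'; nra).
      assert (H5 := Ws_ge1 beta N w0). lra.
Qed.

Definition gn (c w : R -> R) (n : nat) (x : R) := ind_gt (w x) (INR n) * c x.

Fixpoint Sf (c w : R -> R) (beta : R) (N : nat) : R -> R :=
  match N with
  | O => fun x => c x + exp (beta * 1) * gn c w 0 x
  | S N' => fun x => Sf c w beta N' x + exp (beta * (INR (S N') + 1)) * gn c w (S N') x
  end.

Lemma Sf_eq c w beta N x : Sf c w beta N x = Ws beta N (w x) * c x.
Proof. induction N; cbn [Sf Ws]; unfold gn; [change (INR 0) with 0|rewrite IHN]; ring. Qed.

Fixpoint Bd (A D beta : R) (N : nat) : R :=
  match N with
  | O => D + exp (beta * 1) * (A * exp (- (2*beta) * 0) * D)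
  | S N' => Bd A D beta N' + exp (beta * (INR (S N') + 1)) * (A * exp (- (2*beta) * INR (S N')) * D)
  end.

Lemma Bd_eq A D beta N : 0 < beta ->
  Bd A D beta N = D + A * exp beta * D * (1 - exp (-beta) ^ (S N)) / (1 - exp (-beta)).
Proof.
  intros Hb.
  assert (Hq : exp (- beta) < 1) by (rewrite <- exp_0; apply exp_increasing; lra).
  assert (Hm : exp beta * exp (- beta) = 1) by (rewrite <- exp_plus; replace (beta + - beta) with 0 by ring; apply exp_0).
  induction N; cbn [Bd].
  - rewrite Rmult_0_r, exp_0, Rmult_1_r. simpl pow. field. lra.
  - rewrite IHN.
    replace (exp (beta * (INR (S N) + 1)) * (A * exp (- (2 * beta) * INR (S N)) * D))
      with (A * exp beta * D * exp (-beta) ^ (S N)).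
    + replace (S (S N)) with (S N + 1)%nat by lia. rewrite pow_add. field. lra.
    + rewrite <- exp_INR.
      replace (exp (beta * (INR (S N) + 1))) with (exp beta * exp (beta * INR (S N))).
      2:{ rewrite <- exp_plus. f_equal. ring. }
      replace (exp (- (2 * beta) * INR (S N))) with (exp (- beta * INR (S N)) * exp (- beta * INR (S N))).
      2:{ rewrite <- exp_plus. f_equal. ring. }
      assert (exp (beta * INR (S N)) * exp (- beta * INR (S N)) = 1).
      { rewrite <- exp_plus. replace (beta * INR (S N) + - beta * INR (S N)) with 0 by ring. apply exp_0. }
      transitivity (A*exp beta*D*exp(-beta*INR (S N)) * (exp (beta*INR (S N)) * exp (- beta * INR (S N)))); [rewrite H; ring| ring].
Qed.

Lemma moment (c w : R -> R) D A beta :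
  (forall x, 0 <= c x) -> improper_integral c D -> 0 < A -> 0 < beta ->
  (forall x, 0 <= w x) -> (forall a b, exists W, forall x, a <= x <= b -> w x <= W) ->
  (forall n : nat, exists N, improper_integral (gn c w n) N /\ N <= A * exp (- (2*beta) * INR n) * D) ->
  forall a b (pr : Riemann_integrable (fun x => exp (beta * w x) * c x) a b), a <= b ->
    RiemannInt pr <= (1 + A * exp beta / (1 - exp (- beta))) * D.
Proof.
  intros Hc HD HA Hb Hw HW Ht a b pr Hab.
  assert (D0 : 0 <= D).
  { destruct (improper_loc _ _ HD 0 0) as [p]. apply (Rle_trans _ (RiemannInt p)).
    - apply RI_nonneg; [lra|intros; lra].
    - apply (improper_le _ _ _ _ p HD Hc); lra. }
  assert (Hg : forall n x, 0 <= gn c w n x).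
  { intros n x; unfold gn. assert (H := ind_01 (w x) (INR n)). apply Rmult_le_pos; [lra|auto]. }
  assert (Hint : forall N, exists p : Riemann_integrable (Sf c w beta N) a b, RiemannInt p <= Bd A D beta N).
  { induction N.
    - destruct (improper_loc _ _ HD a b) as [p0].
      destruct (Ht 0%nat) as [N0 [HN0 HN0b]].
      destruct (improper_loc _ _ HN0 a b) as [p1].
      pose (q := RiemannInt_P10 (exp (beta * 1)) p0 p1).
      assert (E := RiemannInt_P13 p0 p1 q).
      exists q. cbn [Bd]. eapply Rle_trans; [right; exact E|].
      assert (RiemannInt p0 <= D) by (apply (improper_le _ _ _ _ p0 HD Hc Hab)).
      assert (RiemannInt p1 <= N0) by (apply (improper_le _ _ _ _ p1 HN0 (Hg 0%nat) Hab)).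
      simpl INR in HN0b.
      assert (Hx := exp_pos (beta*1)).
      assert (exp (beta * 1) * RiemannInt p1 <= exp (beta * 1) * (A * exp (- (2 * beta) * 0) * D)) by (apply Rmult_le_compat_l; lra).
      lra.
    - destruct IHN as [p0 Hp0].
      destruct (Ht (S N)) as [N0 [HN0 HN0b]].
      destruct (improper_loc _ _ HN0 a b) as [p1].
      pose (q := RiemannInt_P10 (exp (beta * (INR (S N) + 1))) p0 p1).
      assert (E := RiemannInt_P13 p0 p1 q).
      exists q. cbn [Bd]. eapply Rle_trans; [right; exact E|].
      assert (RiemannInt p1 <= N0) by (apply (improper_le _ _ _ _ p1 HN0 (Hg (S N)) Hab)).
      assert (Hx := exp_pos (beta * (INR (S N) + 1))).
      assert (exp (beta * (INR (S N) + 1)) * RiemannInt p1 <= exp (beta * (INR (S N) + 1)) * (A * exp (- (2 * beta) * INR (S N)) * D)) by (apply Rmult_le_compat_l; lra).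
      lra. }
  destruct (HW a b) as [W HWb].
  destruct (INR_unbounded W) as [N HN].
  destruct (Hint N) as [p Hp].
  assert (RiemannInt pr <= RiemannInt p).
  { apply RiemannInt_P19; auto. intros x Hx. rewrite Sf_eq.
    apply Rmult_le_compat_r; auto. apply Ws_bound; [lra|auto|].
    assert (w x <= W) by (apply HWb; lra). lra. }
  rewrite Bd_eq in Hp by lra.
  assert (Hq : exp (- beta) < 1) by (rewrite <- exp_0; apply exp_increasing; lra).
  assert (Hq0 : 0 < exp (- beta)) by apply exp_pos.
  assert (0 < exp (- beta) ^ S N) by (apply pow_lt; lra).
  assert (He := exp_pos beta).
  assert (0 <= A * exp beta * D) by (apply Rmult_le_pos; [nra|lra]).
  assert (A * exp beta * D * (1 - exp (- beta) ^ S N) / (1 - exp (- beta)) <= A * exp beta * D / (1 - exp (-beta))).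
  { unfold Rdiv. apply Rmult_le_compat_r; [left; apply Rinv_0_lt_compat; lra|]. nra. }
  assert ((1 + A * exp beta / (1 - exp (- beta))) * D = D + A * exp beta * D / (1 - exp (-beta))) by (field; lra).
  lra.
Qed.

Lemma cont_expabs r v : continuity v -> continuity (fun x => exp (r * Rabs (v x))).
Proof.
  intros Hv.
  assert (H1 := continuity_comp v Rabs Hv Rcontinuity_abs).
  assert (H2 := continuity_scal _ r H1).
  assert (H3 := derivable_continuous _ derivable_exp).
  exact (continuity_comp _ _ H2 H3).
Qed.

Lemma core (c v g : R -> R) (D V T alpha beta C d : R) :
  continuity c -> continuity v -> (forall x, 0 <= c x) -> 0 < D -> improper_integral c D ->
  improper_integral (fun x => v x * c x) V -> V <= - d * D ->
  0 < beta -> 0 < C ->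
  (forall a b (pr : Riemann_integrable (fun x => exp (beta * Rabs (v x)) * c x) a b),
      a <= b -> RiemannInt pr <= C * D) ->
  0 <= T -> 0 < alpha -> alpha <= beta / 2 -> alpha * (64 / beta^2 * C) <= d / 2 ->
  (forall x, g x = exp (alpha * Rabs (T + v x))) ->
  exists G, improper_integral (fun x => g x * c x) G /\
            G / D <= exp (alpha * T) * (1 - alpha * d / 2) + C.
Proof.
  intros Hc Hv Hc0 HD0 HD HV HVd Hb HC Hmom HT Ha Hab Had Hg.
  set (eb := fun x => exp (beta * Rabs (v x)) * c x).
  assert (Ceb : continuity eb) by (apply continuity_mult; [apply cont_expabs|]; auto).
  assert (Heb0 : forall x, 0 <= eb x) by (intro x; unfold eb; apply Rmult_le_pos; [left; apply exp_pos|auto]).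
  destruct (improper_exists eb (C * D) (cont_locint _ Ceb) Heb0 Hmom) as [E [HE HEb]].
  set (e := exp (alpha * T)).
  assert (He1 : 1 <= e) by (unfold e; apply exp_ge1; nra).
  assert (Cg : continuity g).
  { replace g with (fun x => exp (alpha * Rabs (T + v x))) by (apply functional_extensionality; intro; auto).
    apply cont_expabs. apply continuity_plus; auto. apply continuity_const. intros ? ?; auto. }
  assert (Cgc : continuity (fun x => g x * c x)) by (apply continuity_mult; auto).
  assert (Hgc0 : forall x, 0 <= g x * c x).
  { intro x. rewrite Hg. apply Rmult_le_pos; [left; apply exp_pos|auto]. }
  assert (Hgeb : forall x, g x * c x <= eb x + (e - 1) * eb x).
  { intro x. rewrite Hg. unfold eb, e.
    replace (exp (beta * Rabs (v x)) * c x + (exp (alpha * T) - 1) * (exp (beta * Rabs (v x)) * c x))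
      with (exp (alpha * T + beta * Rabs (v x)) * c x) by (rewrite exp_plus; ring).
    apply Rmult_le_compat_r; auto. apply exp_le'.
    assert (Rabs (T + v x) <= T + Rabs (v x)) by (split_Rabs; lra).
    assert (0 <= Rabs (v x)) by apply Rabs_pos. nra. }
  assert (HGex : exists G, improper_integral (fun x => g x * c x) G /\ G <= e * (C * D)).
  { apply improper_exists; auto. apply cont_locint; auto.
    intros a b pr Hab'.
    destruct (cont_locint _ Ceb a b) as [p0].
    pose (q := RiemannInt_P10 (e - 1) p0 p0).
    assert (Eq := RiemannInt_P13 p0 p0 q).
    assert (RiemannInt pr <= RiemannInt q) by (apply RiemannInt_P19; auto).
    assert (RiemannInt p0 <= C * D) by (apply Hmom; auto).
    assert ((e-1) * RiemannInt p0 <= (e - 1) * (C*D)) by (apply Rmult_le_compat_l; lra).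
    lra. }
  destruct HGex as [G [HG _]].
  exists G. split; auto.
  set (kap := 64 / beta^2).
  assert (H0 := improper_lin _ _ _ _ (e - 1) HD HD).
  assert (H1 := improper_lin _ _ _ _ (alpha * e) H0 HV).
  assert (H2 := improper_lin _ _ _ _ (e * kap * alpha^2 + 1) H1 HE).
  assert (HGle := improper_mono _ _ _ _ HG H2).
  assert (HGH : G <= D + (e - 1) * D + alpha * e * V + (e * kap * alpha ^ 2 + 1) * E).
  { apply HGle. intro x. cbv beta. rewrite Hg. unfold eb.
    assert (P := pointwise T (v x) alpha beta HT Ha Hb Hab).
    fold e in P. fold kap in P.
    assert (Q := Rmult_le_compat_r (c x) _ _ (Hc0 x) P).
    eapply Rle_trans; [exact Q|]. right; ring. }
  assert (Hkap : 0 < kap) by (unfold kap; apply Rdiv_lt_0_compat; nra).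
  assert (e * kap * alpha^2 * E <= e * kap * alpha^2 * (C*D)).
  { apply Rmult_le_compat_l; [|lra]. apply Rmult_le_pos; [nra|]. nra. }
  assert (alpha * e * V <= alpha * e * (- d * D)) by (apply Rmult_le_compat_l; nra).
  assert (HGD : G <= e * D * (1 - alpha * d + kap * alpha^2 * C) + C * D).
  { assert (D + (e - 1) * D + alpha * e * V + (e * kap * alpha ^ 2 + 1) * E
            <= e * D * (1 - alpha * d + kap * alpha^2 * C) + C * D) by nra. lra. }
  assert (kap * alpha^2 * C <= alpha * d / 2).
  { unfold kap. replace (64 / beta ^ 2 * alpha ^ 2 * C) with (alpha * (alpha * (64 / beta ^ 2 * C))) by ring.
    assert (alpha * (alpha * (64 / beta ^ 2 * C)) <= alpha * (d/2)) by (apply Rmult_le_compat_l; lra). lra. }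
  apply (Rmult_le_reg_r D); auto.
  replace (G / D * D) with G by (field; lra).
  assert (e * D * (1 - alpha * d + kap * alpha ^ 2 * C) <= e * D * (1 - alpha * d / 2)).
  { apply Rmult_le_compat_l; [nra|lra]. }
  fold e. nra.
Qed.

Lemma cdens_cont f1 f2 y th : sym_density f1 -> sym_density f2 -> continuity (cdens f1 f2 y th).
Proof.
  intros [_ [H1 _]] [_ [H2 _]].
  assert (A1 : continuity (fun x => y - x)) by (intro x; reg).
  assert (A2 : continuity (fun x => x - th)) by (intro x; reg).
  exact (continuity_mult _ _ (continuity_comp _ _ A1 H1) (continuity_comp _ _ A2 H2)).
Qed.

Lemma cdens_pos f1 f2 y th x : sym_density f1 -> sym_density f2 -> 0 < cdens f1 f2 y th x.
Proof.
  intros [_ [_ [_ [H1 _]]]] [_ [_ [_ [H2 _]]]]. unfold cdens. apply Rmult_lt_0_compat; auto.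
Qed.

Lemma improper_pos c D : continuity c -> (forall x, 0 < c x) -> improper_integral c D -> 0 < D.
Proof.
  intros Hc Hp HD.
  destruct (continuity_ab_min c 0 1 ltac:(lra) (fun x _ => Hc x)) as [x0 [Hx0 _]].
  destruct (improper_loc _ _ HD 0 1) as [p].
  assert (H1 := RiemannInt_P19 (RiemannInt_P14 0 1 (c x0)) p ltac:(lra) ltac:(intros; unfold fct_cte; apply Hx0; lra)).
  rewrite RiemannInt_P15 in H1.
  assert (RiemannInt p <= D) by (apply (improper_le _ _ _ _ p HD); [intro; left; auto| lra]).
  assert (Hc0 := Hp x0). lra.
Qed.

Lemma RI_scale_bound f g a b K S (pf : Riemann_integrable f a b) (pg : Riemann_integrable g a b) :
  a <= b -> 0 <= K -> (forall x, g x <= K * f x) -> RiemannInt pf <= S -> RiemannInt pg <= K * S.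
Proof.
  intros Hab HK Hgf Hf.
  pose (q := RiemannInt_P10 (K - 1) pf pf).
  assert (Eq := RiemannInt_P13 pf pf q).
  assert (RiemannInt pg <= RiemannInt q).
  { apply RiemannInt_P19; auto. intros x _. assert (H := Hgf x). lra. }
  assert (K * RiemannInt pf <= K * S) by (apply Rmult_le_compat_l; auto). lra.
Qed.

Lemma gtip_moment f1 f2 y (Uf : R -> R -> R) th D a b :
  sym_density f1 -> sym_density f2 -> improper_integral (cdens f1 f2 y th) D ->
  0 < a -> 0 < b ->
  (forall t, 0 <= t -> exists p, cond_exp f1 f2 y (fun u => ind_gt (Rabs (Uf th u)) t) th p
                                /\ p <= a * exp (- b * t)) ->
  (forall lo hi, exists W, forall x, lo <= x <= hi -> Rabs (Uf th x) <= W) ->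
  forall lo hi (pr : Riemann_integrable (fun x => exp (b/2 * Rabs (Uf th x)) * cdens f1 f2 y th x) lo hi),
    lo <= hi -> RiemannInt pr <= (1 + a * exp (b/2) / (1 - exp (- (b/2)))) * D.
Proof.
  intros h1 h2 HD Ha Hb Ht HW.
  apply (moment (cdens f1 f2 y th) (fun x => Rabs (Uf th x)) D a (b/2)); auto.
  - intro x; left; apply cdens_pos; auto.
  - lra.
  - intro; apply Rabs_pos.
  - intro n. destruct (Ht (INR n) (pos_INR n)) as [p [[N [D' [HD' [HN Hp]]]] Hpb]].
    assert (ED := improper_unique _ _ _ HD HD'). subst D'.
    exists N. split; [exact HN|].
    assert (0 < D) by (apply (improper_pos (cdens f1 f2 y th) D (cdens_cont f1 f2 y th h1 h2)); [intro; apply cdens_pos; auto| auto]).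
    replace (- (2 * (b/2)) * INR n) with (- b * INR n) by field.
    replace N with (p * D) by (subst p; field; lra).
    apply Rmult_le_compat_r; lra.
Qed.

Lemma sgn_props th : th <> 0 -> sgn th * th = Rabs th /\ sgn th * sgn th = 1 /\ Rabs (sgn th) = 1.
Proof.
  intros H. unfold sgn. destruct (Rlt_dec 0 th).
  - rewrite Rabs_right by lra. rewrite Rabs_R1. lra.
  - destruct (Rlt_dec th 0); [|lra]. rewrite Rabs_left by lra.
    rewrite Rabs_left by lra. lra.
Qed.

Lemma alpha_choice beta C d : 0 < beta -> 0 < C -> 0 < d ->
  exists alpha0, 0 < alpha0 /\ forall alpha, 0 < alpha -> alpha < alpha0 ->
    alpha <= beta / 2 /\ alpha * (64 / beta^2 * C) <= d / 2.
Proof.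
  intros Hb HC Hd.
  exists (Rmin (beta/2) (d * beta^2 / (128 * C))). split.
  - apply Rmin_glb_lt; [lra|]. apply Rdiv_lt_0_compat; [apply Rmult_lt_0_compat; [lra| apply pow_lt; lra]|lra].
  - intros alpha Ha Hlt. 
    assert (H1 : alpha < beta/2) by (eapply Rlt_le_trans; [exact Hlt| apply Rmin_l]).
    assert (H2 : alpha < d * beta^2 / (128 * C)) by (eapply Rlt_le_trans; [exact Hlt| apply Rmin_r]).
    split; [lra|].
    assert (alpha * (128 * C) < d * beta^2).
    { apply (Rmult_lt_compat_r (128*C)) in H2; [|lra].
      replace (d * beta ^ 2 / (128 * C) * (128 * C)) with (d * beta^2) in H2 by (field; lra). lra. }
    replace (alpha * (64 / beta ^ 2 * C)) with (alpha * (128 * C) / (2 * beta^2)) by (field; lra).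
    apply (Rmult_le_reg_r (2 * beta^2)); [nra|].
    replace (alpha * (128 * C) / (2 * beta ^ 2) * (2 * beta ^ 2)) with (alpha * (128 * C)) by (field; lra).
    lra.
Qed.

Theorem mainTheorem5 (f1 f2 : R -> R) (y : R)
  (hf1 : sym_density f1) (hf2 : sym_density f2) :
  (forall d k, 0 < d -> 0 < k ->
     DUR f1 f2 y d k -> GTIP f1 f2 y (fun theta x => x - theta) ->
     exists alpha0, 0 < alpha0 /\
       forall alpha, 0 < alpha -> alpha < alpha0 ->
         exists K, 0 < K /\
           forall theta, Rabs theta > k ->
             exists m, cond_exp f1 f2 y (fun x => exp (alpha * Rabs x)) theta m /\
                       m <= exp (alpha * Rabs theta) * (1 - alpha * d / 2) + K) /\
  (forall d k, 0 < d -> 0 < k ->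
     PUR f1 f2 y d k -> GTIP f1 f2 y (fun theta x => x) ->
     exists alpha0, 0 < alpha0 /\
       forall alpha, 0 < alpha -> alpha < alpha0 ->
         exists K, 0 < K /\
           forall theta, Rabs theta > k ->
             exists m, cond_exp f1 f2 y
                         (fun x => exp (alpha * Rabs (y - (x - theta)))) theta m /\
                       m <= exp (alpha * Rabs theta) * (1 - alpha * d / 2) + K).
Proof.
  split.
  - intros d k Hd Hk HDUR [a [b [Ha [Hb Ht]]]].
    set (C := 1 + a * exp (b/2) / (1 - exp (- (b/2)))).
    assert (HC : 0 < C).
    { assert (exp (- (b/2)) < 1) by (rewrite <- exp_0; apply exp_increasing; lra).
      assert (0 < a * exp (b/2) / (1 - exp (- (b/2)))) by (apply Rdiv_lt_0_compat; [apply Rmult_lt_0_compat; [lra|apply exp_pos]|lra]).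
      unfold C; lra. }
    destruct (alpha_choice (b/2) C d ltac:(lra) HC Hd) as [alpha0 [Ha0 Hal]].
    exists alpha0. split; auto. intros alpha Ha1 Ha2.
    destruct (Hal alpha Ha1 Ha2) as [Hal1 Hal2].
    exists C. split; auto. intros th Hth.
    destruct (HDUR th Hth) as [m0 [[N [D [HD [HN Hm0]]]] Hm0b]].
    assert (Hth0 : th <> 0) by (intro; subst; rewrite Rabs_R0 in Hth; lra).
    destruct (sgn_props th Hth0) as [Hs1 [Hs2 Hs3]].
    set (s := sgn th) in *.
    set (c := cdens f1 f2 y th).
    assert (Cc : continuity c) by (apply cdens_cont; auto).
    assert (Hc0 : forall x, 0 <= c x) by (intro; left; apply cdens_pos; auto).
    assert (HD0 : 0 < D) by (apply (improper_pos c D Cc); [intro; apply cdens_pos; auto|auto]).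
    set (v := fun x => s * (x - th)).
    assert (Cv : continuity v) by (intro x; unfold v; reg).
    assert (HV1 := improper_lin _ _ _ _ (- th) HN HD).
    assert (HV2 := improper_lin _ _ _ _ (s - 1) HV1 HV1).
    assert (HV : improper_integral (fun x => v x * c x) (s * (N - th * D))).
    { eapply improper_ext; [|replace (s * (N - th * D)) with
        (N + - th * D + (s - 1) * (N + - th * D)) by ring; exact HV2].
      intro x; cbv beta; unfold v, c; ring. }
    assert (HVd : s * (N - th * D) <= - d * D).
    { assert (s * (N / D) <= Rabs th - d).
      { eapply Rle_trans; [|subst m0; exact Hm0b]. eapply Rle_trans; [apply Rle_abs|].
        rewrite Rabs_mult, Hs3. lra. }
      replace (s * (N - th * D)) with (s * (N / D) * D - (s * th) * D) by (field; lra).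
      rewrite Hs1. apply (Rmult_le_compat_r D) in H; lra. }
    assert (Hmom : forall lo hi (pr : Riemann_integrable (fun x => exp (b/2 * Rabs (v x)) * c x) lo hi),
               lo <= hi -> RiemannInt pr <= C * D).
    { assert (Ef : (fun x => exp (b/2 * Rabs (v x)) * c x) =
                   (fun x => exp (b/2 * Rabs ((fun theta x => x - theta) th x)) * cdens f1 f2 y th x)).
      { apply functional_extensionality; intro x. unfold v, c. rewrite Rabs_mult, Hs3. f_equal. f_equal. ring. }
      rewrite Ef. intros lo hi pr Hlh.
      apply (gtip_moment f1 f2 y (fun theta x => x - theta) th D a b); auto.
      intros lo' hi'. exists (Rabs (lo' - th) + Rabs (hi' - th)). intros x Hx. split_Rabs; lra. }
    destruct (core c v (fun x => exp (alpha * Rabs x)) D (s * (N - th * D)) (Rabs th) alpha (b/2) C d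
                Cc Cv Hc0 HD0 HD HV HVd ltac:(lra) HC Hmom (Rabs_pos th) Ha1 Hal1 Hal2) as [G [HG HGb]].
    { intro x. f_equal. f_equal. unfold v. rewrite <- Hs1.
      replace (s * th + s * (x - th)) with (s * x) by ring. rewrite Rabs_mult, Hs3. ring. }
    exists (G / D). split; auto. exists G, D. split; auto.
  - intros d k Hd Hk HPUR [a [b [Ha [Hb Ht]]]].
    set (C1 := 1 + a * exp (b/2) / (1 - exp (- (b/2)))).
    assert (HC1 : 0 < C1).
    { assert (exp (- (b/2)) < 1) by (rewrite <- exp_0; apply exp_increasing; lra).
      assert (0 < a * exp (b/2) / (1 - exp (- (b/2)))) by (apply Rdiv_lt_0_compat; [apply Rmult_lt_0_compat; [lra|apply exp_pos]|lra]).
      unfold C1; lra. }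
    set (C := exp (b/2 * Rabs y) * C1).
    assert (HC : 0 < C) by (unfold C; apply Rmult_lt_0_compat; [apply exp_pos|auto]).
    destruct (alpha_choice (b/2) C d ltac:(lra) HC Hd) as [alpha0 [Ha0 Hal]].
    exists alpha0. split; auto. intros alpha Ha1 Ha2.
    destruct (Hal alpha Ha1 Ha2) as [Hal1 Hal2].
    exists C. split; auto. intros th Hth.
    destruct (HPUR th Hth) as [m0 [[N [D [HD [HN Hm0]]]] Hm0b]].
    assert (Hth0 : th <> 0) by (intro; subst; rewrite Rabs_R0 in Hth; lra).
    destruct (sgn_props th Hth0) as [Hs1 [Hs2 Hs3]].
    set (s := sgn th) in *.
    set (c := cdens f1 f2 y th).
    assert (Cc : continuity c) by (apply cdens_cont; auto).
    assert (Hc0 : forall x, 0 <= c x) by (intro; left; apply cdens_pos; auto).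
    assert (HD0 : 0 < D) by (apply (improper_pos c D Cc); [intro; apply cdens_pos; auto|auto]).
    set (v := fun x => s * (y - x)).
    assert (Cv : continuity v) by (intro x; unfold v; reg).
    assert (HV2 := improper_lin _ _ _ _ (- s - 1) HN HN).
    assert (HV : improper_integral (fun x => v x * c x) (- s * N)).
    { eapply improper_ext; [|replace (- s * N) with (N + (- s - 1) * N) by ring; exact HV2].
      intro x; cbv beta; unfold v, c; ring. }
    assert (HVd : - s * N <= - d * D).
    { subst m0. replace N with (N / D * D) by (field; lra).
      apply Rge_le in Hm0b. apply (Rmult_le_compat_r D) in Hm0b; [|lra]. lra. }
    assert (Hmom : forall lo hi (pr : Riemann_integrable (fun x => exp (b/2 * Rabs (v x)) * c x) lo hi),
               lo <= hi -> RiemannInt pr <= C * D).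
    { intros lo hi pr Hlh.
      destruct (cont_locint _ (continuity_mult _ _ (cont_expabs (b/2) (fun x => x) (fun x => derivable_continuous_pt _ _ (derivable_pt_id x))) Cc) lo hi) as [pf].
      unfold C. rewrite Rmult_assoc.
      apply (RI_scale_bound _ _ lo hi _ _ pf pr Hlh); [left; apply exp_pos| |].
      - intro x. unfold mult_fct; cbv beta. unfold v. rewrite <- Rmult_assoc, <- exp_plus.
        apply Rmult_le_compat_r; auto. apply exp_le'.
        rewrite Rabs_mult, Hs3. assert (Rabs (y - x) <= Rabs y + Rabs x) by (split_Rabs; lra). nra.
      - apply (gtip_moment f1 f2 y (fun theta x => x) th D a b); auto.
        intros lo' hi'. exists (Rabs lo' + Rabs hi'). intros x Hx. split_Rabs; lra. }
    destruct (core c v (fun x => exp (alpha * Rabs (y - (x - th)))) D (- s * N) (Rabs th) alpha (b/2) C d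
                Cc Cv Hc0 HD0 HD HV HVd ltac:(lra) HC Hmom (Rabs_pos th) Ha1 Hal1 Hal2) as [G [HG HGb]].
    { intro x. f_equal. f_equal. unfold v. rewrite <- Hs1.
      replace (s * th + s * (y - x)) with (s * (y - (x - th))) by ring. rewrite Rabs_mult, Hs3. ring. }
    exists (G / D). split; auto. exists G, D. split; auto.
Qed.
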